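(* Let $\lambda$ be a partition of $n$ and $0\le k\le n-1$. Then $$\mathrm{QYT}_{=k+1}(\lambda)=\sum_{m=0}^{k}\binom{n+1}{k-m}(-1)^{k-m}\,\mathrm{SSYT}_{m+1}(\lambda),$$ where both sides denote numbers of tableaux.
   Context: A semistandard Young tableau (SSYT) of shape $\lambda$ is a filling of the Young diagram of $\lambda$ with positive integers weakly increasing along rows and strictly increasing up columns (French convention: rows counted from bottom to top). $\mathrm{SSYT}_{m}(\lambda)$ is the number of SSYT of shape $\lambda$ with all entries at most $m$. A quasi-Yamanouchi tableau (QYT) is an SSYT such that whenever an entry $i\ge2$ appears, some instance of $i$ lies in a strictly higher row than some instance of $i-1$. $\mathrm{QYT}_{=m}(\lambda)$ is the number of QYT of shape $\lambda$ whose largest entry is exactly $m$. *)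

(* Defs.v *)
From mathcomp Require Import all_boot all_order all_algebra.
Set Implicit Arguments. Unset Strict Implicit. Unset Printing Implicit Defensive.

Definition is_partition (la : seq nat) : bool :=
  sorted geq la && all (fun x => 0 < x) la.

(* French convention: row i (i = 0 is the bottom row) has la_i cells,
   in columns 0 .. la_i - 1. *)
Definition in_shape (la : seq nat) (i j : nat) : bool := j < nth 0 la i.

(* A filling with entries in {1..m} is encoded as a function on the bounding
   box 'I_(size la) * 'I_(head 0 la) with values in 'I_m.+1 = {0..m}, where
   the value 0 is used exactly on the box cells outside the diagram. *)
Definition filling (la : seq nat) (m : nat) :=
  {ffun 'I_(size la) * 'I_(head 0 la) -> 'I_m.+1}.

Definition entry (la : seq nat) (m : nat) (t : filling la m) (i j : nat) : nat :=
  match insub i, insub j with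
  | Some i', Some j' => val (t (i', j'))
  | _, _ => 0
  end.

Definition is_ssyt (la : seq nat) (m : nat) (t : filling la m) : bool :=
  [forall c : 'I_(size la) * 'I_(head 0 la),
     (val (t c) != 0) == in_shape la c.1 c.2]
  && [forall i : 'I_(size la), forall j : 'I_(head 0 la),
        (in_shape la i j.+1 ==> (entry t i j <= entry t i j.+1))
        && (in_shape la i.+1 j ==> (entry t i j < entry t i.+1 j))].

Definition is_qyt (la : seq nat) (m : nat) (t : filling la m) : bool :=
  is_ssyt t &&
  [forall c : 'I_(size la) * 'I_(head 0 la),
     (2 <= val (t c)) ==>
     [exists c1 : 'I_(size la) * 'I_(head 0 la),
        exists c2 : 'I_(size la) * 'I_(head 0 la),
          [&& val (t c1) == val (t c), val (t c2) == (val (t c)).-1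
            & (val c2.1 < val c1.1)%N]]].

Definition SSYT (m : nat) (la : seq nat) : nat :=
  #|[set t : filling la m | is_ssyt t]|.

Definition QYT_eq (m : nat) (la : seq nat) : nat :=
  #|[set t : filling la m | is_qyt t &&
       [exists c : 'I_(size la) * 'I_(head 0 la), val (t c) == m]]|.

(* Main.v *)
Require Import Defs.
From mathcomp Require Import all_boot all_order all_algebra.
From mathcomp Require Import zify.
Set Implicit Arguments. Unset Strict Implicit. Unset Printing Implicit Defensive.

Section Tab.
Variable la : seq nat.
Hypothesis Hla : is_partition la.

Definition cell := ('I_(size la) * 'I_(head 0 la))%type.
Definition ins (c : cell) := in_shape la c.1 c.2.

Lemma nth_anti i i' : i <= i' -> nth 0 la i' <= nth 0 la i.
Proof.
move=> le; case: (ltnP i' (size la)) => hi'; last by rewrite nth_default.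
case/andP: Hla => Hs _.
have Htr : transitive geq by move=> ? ? ? h1 h2; apply: leq_trans h2 h1.
have := @sorted_leq_nth _ geq Htr (@leqnn) 0 la Hs i i'.
by apply => //; rewrite inE; apply: leq_ltn_trans hi'.
Qed.

Lemma ins_down i j i' j' : in_shape la i j -> i' <= i -> j' <= j -> in_shape la i' j'.
Proof.
rewrite /in_shape => h hi hj; apply: leq_ltn_trans hj _.
by apply: leq_trans h (nth_anti hi).
Qed.

Lemma ins_box i j : in_shape la i j -> (i < size la) && (j < head 0 la).
Proof.
rewrite /in_shape => h; apply/andP; split.
  by case: (ltnP i (size la)) => // hi; rewrite nth_default in h.
by rewrite -nth0; apply: leq_trans h (nth_anti (leq0n i)).
Qed.

Definition vt M (t : filling la M) (c : cell) : nat := val (t c).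

Lemma entryE M (t : filling la M) (c : cell) : entry t c.1 c.2 = vt t c.
Proof. by case: c => i j; rewrite /entry /= !valK. Qed.

Lemma entry_out M (t : filling la M) i j : ~~ ((i < size la) && (j < head 0 la)) -> entry t i j = 0.
Proof.
rewrite /entry; case/nandP => h.
  by rewrite insubN.
by case: insub => // ?; rewrite insubN.
Qed.

Definition mkf M (f : cell -> nat) : filling la M := [ffun c => inord (f c)].

Lemma vt_mkf M f c : f c <= M -> vt (mkf M f) c = f c.
Proof. by move=> h; rewrite /vt /mkf ffunE; apply: inordK. Qed.

Definition mono (f : cell -> nat) := forall a b : cell, ins b -> a.1 <= b.1 -> a.2 <= b.2 ->
  (f a <= f b) /\ (a.1 < b.1 -> f a < f b).
Definition shp (f : cell -> nat) := forall c, (f c != 0) = ins c.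

Lemma ssytP M (t : filling la M) : is_ssyt t <-> shp (vt t) /\ mono (vt t).
Proof.
split.
  case/andP => /forallP Hs /forallP Hl; split.
    by move=> c; have := Hs c; move/eqP.
  pose F i j := entry t i j.
  have Lr : forall i j, in_shape la i j.+1 -> F i j <= F i j.+1.
    move=> i j h; case/andP: (ins_box h) => hi hj.
    have hj' : j < head 0 la by apply: ltnW.
    have := Hl (Ordinal hi); move/forallP/(_ (Ordinal hj'))/andP => [/implyP h1 _].
    exact: h1.
  have Lc : forall i j, in_shape la i.+1 j -> F i j < F i.+1 j.
    move=> i j h; case/andP: (ins_box h) => hi hj.
    have hi' : i < size la by apply: ltnW.
    have := Hl (Ordinal hi'); move/forallP/(_ (Ordinal hj))/andP => [_ /implyP h1].
    exact: h1.
  have Row : forall i j d, in_shape la i (j + d) -> F i j <= F i (j + d).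
    move=> i j; elim=> [|d IH] h; first by rewrite addn0.
    rewrite addnS in h *; apply: leq_trans (Lr _ _ h).
    by apply: IH; apply: ins_down h _ _.
  have Col : forall i j d, in_shape la (i + d.+1) j -> F i j < F (i + d.+1) j.
    move=> i j; elim=> [|d IH] h; first by rewrite addn1 in h *; apply: Lc.
    rewrite addnS in h *; apply: leq_ltn_trans (Lc _ _ h).
    by apply: ltnW; apply: IH; apply: ins_down h _ _.
  move=> [i j] [i' j'] /= hb hi hj.
  rewrite -!entryE /=.
  have R2 : F i' j <= F i' j'.
    by have := Row i' j (j' - j); rewrite subnKC //; apply.
  have C2 : i < i' -> F i j < F i' j.
    move=> lt; have := Col i j (i' - i).-1.
    rewrite prednK ?subn_gt0 // subnKC ?(ltnW lt) //; apply.
    by apply: ins_down hb _ _.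
  split; last by move=> lt; apply: leq_trans R2; apply: C2.
  case: (ltngtP i i') hi => // [lt _|eq _]; first by apply: ltnW; apply: leq_trans R2; apply: C2.
  by move: R2; rewrite /F -eq.
case=> Hs Hm; apply/andP; split.
  by apply/forallP => c; rewrite Hs.
apply/forallP => i; apply/forallP => j; apply/andP; split; apply/implyP => h.
  case/andP: (ins_box h) => _ hj1.
  have := Hm (i, j) (i, Ordinal hj1) h (leqnn _) (leqnSn _).
  by rewrite -!entryE /=; case.
case/andP: (ins_box h) => hi1 _.
have := Hm (i, j) (Ordinal hi1, j) h (leqnSn _) (leqnn _).
by rewrite -!entryE /=; case=> _; apply.
Qed.

End Tab.

Section Tab2.
Variable la : seq nat.
Hypothesis Hla : is_partition la.
Local Notation cell := (cell la).
Local Notation ins := (@ins la).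

Definition descb M (t : filling la M) (u : nat) : bool :=
  [exists a : cell, exists b : cell, [&& vt t a == u, vt t b == u.+1 & a.1 < b.1]].
Definition used M (t : filling la M) (v : nat) := [exists c : cell, vt t c == v].
Definition contig M (t : filling la M) := is_ssyt t && [forall v : 'I_M.+1, (0 < v) ==> used t v].
Definition nd M (t : filling la M) := #|[set u : 'I_M | (0 < u) && ~~ descb t u]|.
Definition nused M (t : filling la M) := #|[set v : 'I_M.+1 | (0 < v) && used t v]|.
Definition notleft M (t : filling la M) (c : cell) :=
  [exists y : cell, (vt t y == vt t c) && (y.2 < c.2)].

Section Fix.
Variable M : nat.
Variable t : filling la M.
Hypothesis Ht : is_ssyt t.

Lemma t_shp : shp (vt t). Proof. by case: (ssytP Hla t) => h _; case: (h Ht). Qed.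
Lemma t_mono : mono (vt t). Proof. by case: (ssytP Hla t) => h _; case: (h Ht). Qed.

Lemma ins_vt c : vt t c != 0 -> ins c. Proof. by rewrite t_shp. Qed.
Lemma vt_ins c : ins c -> 0 < vt t c. Proof. by rewrite lt0n t_shp. Qed.

Lemma HS1 a b : vt t a = vt t b -> vt t a != 0 -> (a.2 : nat) = b.2 -> a = b.
Proof.
move=> e nz e2.
have ia := ins_vt nz. have ib : ins b by apply: ins_vt; rewrite -e.
case: (ltngtP a.1 b.1) => h.
- by have [_ /(_ h)] := t_mono ib (ltnW h) (eq_leq e2); rewrite e ltnn.
- by have [_ /(_ h)] := t_mono ia (ltnW h) (eq_leq (esym e2)); rewrite e ltnn.
- by move: e2 h; case: a b {e nz ia ib} => [a1 a2] [b1 b2] /= e2 e1; congr pair; apply: val_inj.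
Qed.

Lemma HS2 a b : vt t a = vt t b -> vt t a != 0 -> a.2 < b.2 -> b.1 <= a.1.
Proof.
move=> e nz lt; rewrite leqNgt; apply/negP => h.
have ib : ins b by apply: ins_vt; rewrite -e.
by have [_ /(_ h)] := t_mono ib (ltnW h) (ltnW lt); rewrite e ltnn.
Qed.

Lemma ND i a b : 0 < i -> ~~ descb t i -> vt t a = i -> vt t b = i.+1 -> (b.1 <= a.1) /\ (a.2 < b.2).
Proof.
move=> i0 nd ea eb.
have h1 : b.1 <= a.1.
  rewrite leqNgt; apply/negP => h; move/negP: nd; apply.
  by apply/existsP; exists a; apply/existsP; exists b; rewrite ea eb !eqxx h.
split => //; rewrite ltnNge; apply/negP => h2.
have ia : ins a by apply: ins_vt; rewrite ea -lt0n.
by have [/= + _] := t_mono ia h1 h2; rewrite ea eb ltnn.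
Qed.

Variable c0 : cell.

Definition leftmost (w : nat) : cell :=
  odflt c0 [pick c | (vt t c == w) && [forall c', (vt t c' == w) ==> (c.2 <= c'.2)]].

Lemma leftmostP w : used t w ->
  vt t (leftmost w) = w /\ forall c', vt t c' = w -> (leftmost w).2 <= c'.2.
Proof.
rewrite /leftmost => /existsP [c1 /eqP h1].
case: pickP => [c /andP [/eqP h /forallP H]|H] /=.
  by split => // c' e; have := H c'; rewrite e eqxx.
exfalso.
case: (@arg_minnP _ c1 (fun c => vt t c == w) (fun c => val c.2)); first by rewrite h1.
move=> c /eqP Pc Hmin; have := H c; rewrite Pc eqxx /=.
move/negP; apply; apply/forallP => c'; apply/implyP => e; exact: Hmin.
Qed.

Lemma leftmost_uniq w x : vt t x = w -> w != 0 -> (forall c', vt t c' = w -> x.2 <= c'.2) ->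
  leftmost w = x.
Proof.
move=> ex nz H.
have u : used t w by apply/existsP; exists x; rewrite ex.
have [el Hl] := leftmostP u.
apply: HS1; rewrite ?el ?ex //.
by apply/eqP; rewrite eqn_leq Hl // H.
Qed.

End Fix.

Lemma sum_lt h x : \sum_(j < h) (j < x : nat) = minn x h.
Proof.
elim: h => [|h IH]; first by rewrite big_ord0 minn0.
rewrite big_ord_recr /= IH; case: (ltnP h x) => hx /=; lia.
Qed.

Lemma card_shape : #|[set c : cell | ins c]| = sumn la.
Proof.
rewrite -sum1_card big_mkcond /=.
have -> : \sum_(c : cell) (if c \in [set c : cell | ins c] then 1 else 0) =
   \sum_(i < size la) \sum_(j < head 0 la) (if (i, j) \in [set c : cell | ins c] then 1 else 0).
  by rewrite pair_big; apply: eq_big => // [[i j]].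
have -> : \sum_(i < size la) \sum_(j < head 0 la) (if (i, j) \in [set c : cell | ins c] then 1 else 0)
   = \sum_(i < size la) nth 0 la i.
  apply: eq_bigr => i _.
  rewrite (eq_bigr (fun j : 'I_(head 0 la) => (j < nth 0 la i : nat))); last first.
    by move=> j _; rewrite inE /ins /in_shape /=; case: (j < _).
  rewrite sum_lt; apply/minn_idPl; rewrite -nth0; exact: nth_anti.
by rewrite sumnE (big_nth 0) big_mkord.
Qed.

End Tab2.

Ltac ifs := repeat (match goal with
 | |- context [if ?b then _ else _] =>
    lazymatch b with context [if _ then _ else _] => fail | _ => case: (boolP b) => ? end
 end); try lia.

Section Tab3.
Variable la : seq nat.
Hypothesis Hla : is_partition la.
Local Notation cell := (cell la).
Local Notation ins := (@ins la).

Lemma vt_le M (t : filling la M) c : vt t c <= M.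
Proof. by rewrite -ltnS; apply: ltn_ord. Qed.

Lemma contig_ssyt M (t : filling la M) : contig t -> is_ssyt t.
Proof. by case/andP. Qed.

Lemma contig_used M (t : filling la M) w : contig t -> 0 < w -> w <= M -> used t w.
Proof.
case/andP => _ /forallP H w0 wM.
by have := H (inord w); rewrite inordK ?ltnS // w0.
Qed.

Lemma descb_ext M M' (T : filling la M) (t : filling la M') a a' :
  (forall c, (vt T c == a) = (vt t c == a')) ->
  (forall c, (vt T c == a.+1) = (vt t c == a'.+1)) -> descb T a = descb t a'.
Proof.
move=> H1 H2; rewrite /descb; apply: eq_existsb => p; apply: eq_existsb => q.
by rewrite H1 H2.
Qed.

Section Split.
Variable r : nat.
Variable t : filling la r.
Variable x : cell.

Definition sfun (c : cell) : nat :=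
  if vt t x < vt t c then (vt t c).+1
  else if (vt t c == vt t x) && (x.2 <= c.2) then (vt t x).+1 else vt t c.

Definition splitf : filling la r.+1 := mkf r.+1 sfun.

Local Notation v := (vt t x).
Local Notation T := splitf.

Lemma vtS c : vt T c = sfun c.
Proof.
rewrite /splitf vt_mkf //; rewrite /sfun; have := vt_le t c; have := vt_le t x.
ifs.
Qed.

Lemma E1 w c : w < v -> (vt T c == w) = (vt t c == w).
Proof. by rewrite vtS /sfun; ifs. Qed.
Lemma E2 c : (vt T c == v) = (vt t c == v) && (c.2 < x.2).
Proof. by rewrite vtS /sfun; ifs. Qed.
Lemma E3 c : (vt T c == v.+1) = (vt t c == v) && (x.2 <= c.2).
Proof. by rewrite vtS /sfun; ifs. Qed.
Lemma E4 w c : v.+1 < w -> (vt T c == w) = (vt t c == w.-1).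
Proof. by rewrite vtS /sfun; ifs. Qed.

Hypothesis Ht : contig t.
Hypothesis Hx : ins x.
Hypothesis Hnl : notleft t x.

Lemma tS : is_ssyt t. Proof. exact: contig_ssyt. Qed.

Lemma v_gt0 : 0 < v. Proof. exact: (vt_ins Hla tS). Qed.

Lemma split_ssyt : is_ssyt T.
Proof.
have v0 := v_gt0.
apply/(ssytP Hla); split.
  move=> c; rewrite vtS -(t_shp Hla tS c) /sfun.
  by ifs.
move=> a b ib h1 h2.
have [m1 m2] := t_mono Hla tS ib h1 h2.
rewrite !vtS /sfun.
split.
  ifs.
move=> /m2 lt.
ifs.
Qed.

Lemma notleftE : exists2 y, vt t y = v & y.2 < x.2.
Proof. by case/existsP: Hnl => y /andP [/eqP e lt]; exists y. Qed.

Lemma split_contig : contig T.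
Proof.
apply/andP; split; first exact: split_ssyt.
apply/forallP => w; apply/implyP => w0.
have := ltn_ord w; rewrite ltnS => wle.
have vr := vt_le t x.
have v0 := v_gt0.
case: (ltngtP w v) => hw.
- have /existsP [c /eqP e] : used t w by apply: contig_used => //; lia.
  apply/existsP; exists c; by rewrite E1 // e.
- case: (ltngtP w v.+1) => hw2; first lia.
  + have /existsP [c1 /eqP e] : used t w.-1 by apply: contig_used => //; lia.
    apply/existsP; exists c1; by rewrite E4 // e.
  + apply/existsP; exists x; rewrite hw2 E3 eqxx leqnn //.
- case: notleftE => y ey lt; apply/existsP; exists y; rewrite hw E2 ey eqxx lt //.
Qed.

Lemma split_nondesc : ~~ descb T v.
Proof.
apply/negP; case/existsP => a /existsP [b /and3P [ea eb lt]].
rewrite E2 in ea; rewrite E3 in eb.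
case/andP: ea => /eqP ea la2; case/andP: eb => /eqP eb lb2.
have := HS2 Hla tS (etrans ea (esym eb)) _ (leq_trans la2 lb2).
rewrite ea -lt0n v_gt0 => /(_ isT); lia.
Qed.

Lemma descS u : 0 < u -> u < r -> u != v -> descb T (bump v u) = descb t u.
Proof.
move=> u0 ur uv; rewrite /bump.
case: (ltngtP u.+1 v) => hu.
- rewrite leqNgt (ltnW hu) add0n; apply: descb_ext => c; apply: E1; lia.
- have -> : v <= u = true by lia.
  rewrite add1n; apply: descb_ext => c; rewrite E4 //; lia.
- have -> : v <= u = false by lia.
  rewrite add0n; apply/idP/idP.
    case/existsP => a /existsP [b /and3P [ea eb lt]].
    rewrite E1 in ea; last lia.
    rewrite hu E2 in eb; case/andP: eb => eb _.
    by apply/existsP; exists a; apply/existsP; exists b; rewrite ea hu eb lt.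
  case/existsP => a /existsP [b /and3P [ea eb lt]].
  case: (ltnP b.2 x.2) => hb.
    apply/existsP; exists a; apply/existsP; exists b.
    by rewrite E1 ?ea; [rewrite hu E2 hb -hu eb lt | lia].
  case: notleftE => y ey ly.
  have := HS2 Hla tS (_ : vt t y = vt t b) _ (leq_trans ly hb).
  rewrite ey -lt0n v_gt0 -hu (eqP eb) => /(_ erefl isT) yb.
  apply/existsP; exists a; apply/existsP; exists y.
  rewrite E1 ?ea; last lia.
  by rewrite hu E2 ey eqxx ly /=; apply: leq_trans lt yb.
Qed.

End Split.

Lemma descS_top r (t : filling la r) x : contig t -> ins x -> notleft t x ->
  descb (splitf t x) (vt t x).+1 = descb t (vt t x).
Proof.
move=> Ht Hx Hnl.
have tS' := contig_ssyt Ht.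
apply/idP/idP.
  case/existsP => a /existsP [b /and3P [ea eb lt]].
  rewrite E3 in ea; rewrite E4 // in eb.
  case/andP: ea => ea _.
  by apply/existsP; exists a; apply/existsP; exists b; rewrite ea eb lt.
case/existsP => a /existsP [b /and3P [ea eb lt]].
case: (leqP x.2 a.2) => ha.
  apply/existsP; exists a; apply/existsP; exists b.
  by rewrite E3 ea ha E4 // eb lt.
have := HS2 Hla tS' (_ : vt t a = vt t x) _ ha.
rewrite (eqP ea) -lt0n (vt_ins Hla tS' Hx) => /(_ erefl isT) xa.
apply/existsP; exists x; apply/existsP; exists b.
by rewrite E3 eqxx leqnn E4 // eb /=; apply: leq_ltn_trans xa lt.
Qed.

End Tab3.



Section Tab4.
Variable la : seq nat.
Hypothesis Hla : is_partition la.
Local Notation cell := (cell la).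
Local Notation ins := (@ins la).

Definition mfun r (T : filling la r.+1) (i : nat) (c : cell) : nat :=
  if i < vt T c then (vt T c).-1 else vt T c.
Definition mergef r (T : filling la r.+1) (i : nat) : filling la r := mkf r (mfun T i).

Lemma vtM r (T : filling la r.+1) i c : i <= r -> vt (mergef T i) c = mfun T i c.
Proof.
move=> ir; rewrite /mergef vt_mkf // /mfun; have := vt_le T c; ifs.
Qed.

Lemma card_lift n (P : pred 'I_n.+1) j : P j ->
  #|[set u | P u]| = #|[set u : 'I_n | P (lift j u)]|.+1.
Proof.
move=> Pj; rewrite -!sum1_card !big_set /= (bigD1_ord j) //= add1n.
Qed.

Lemma nd_split r (t : filling la r) x : contig t -> ins x -> notleft t x ->
  nd (splitf t x) = (nd t).+1.
Proof.
move=> Ht Hx Hnl.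
have v0 := v_gt0 Hla Ht Hx.
rewrite /nd (@card_lift r (fun u : 'I_r.+1 => (0 < u) && ~~ descb (splitf t x) u) (t x)); last first.
  by rewrite /= v0 split_nondesc.
congr _.+1; apply: eq_card => u; rewrite !inE.
have -> : (lift (t x) u : nat) = bump (vt t x) u by [].
have b0 : (0 < bump (vt t x) u) = (0 < u) by rewrite /bump; lia.
rewrite b0; case: (posnP u) => [->|u0] //=.
case: (eqVneq (u : nat) (vt t x)) => [e|ne].
  by rewrite e /bump leqnn add1n descS_top.
by rewrite descS // ltn_ord.
Qed.

Lemma merge_split r (t : filling la r) x : mergef (splitf t x) (vt t x) = t.
Proof.
apply/ffunP => c; apply/val_inj.
change (vt (mergef (splitf t x) (vt t x)) c = vt t c).
rewrite vtM ?vt_le // /mfun (vtS Hla) /sfun. ifs.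
Qed.

Lemma leftmost_split r (t : filling la r) x c0 : contig t -> ins x -> notleft t x ->
  leftmost (splitf t x) c0 (vt t x).+1 = x.
Proof.
move=> Ht Hx Hnl.
apply: (leftmost_uniq Hla (split_ssyt Hla Ht Hx Hnl)) => //.
  by apply/eqP; rewrite (E3 Hla) eqxx leqnn.
by move=> c' /eqP; rewrite (E3 Hla) => /andP [].
Qed.

Section Merge.
Variable r : nat.
Variable T : filling la r.+1.
Variable i : nat.
Variable c0 : cell.
Hypothesis HT : contig T.
Hypothesis i0 : 0 < i.
Hypothesis ir : i <= r.
Hypothesis Hnd : ~~ descb T i.

Local Notation x := (leftmost T c0 i.+1).
Local Notation t := (mergef T i).

Lemma TS : is_ssyt T. Proof. exact: contig_ssyt. Qed.

Lemma xP : vt T x = i.+1 /\ forall c', vt T c' = i.+1 -> x.2 <= c'.2.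
Proof. by apply: leftmostP; apply: contig_used. Qed.

Lemma merge_ssyt : is_ssyt t.
Proof.
apply/(ssytP Hla); split.
  by move=> c; rewrite vtM // -(t_shp Hla TS c) /mfun; ifs.
move=> a b ib h1 h2.
have [m1 m2] := t_mono Hla TS ib h1 h2.
rewrite !vtM // /mfun.
split; first by ifs.
move=> lt; have := m2 lt => {}m2.
case: (eqVneq (vt T a) i) => ea; last by ifs.
case: (eqVneq (vt T b) i.+1) => eb; last by ifs.
by move/negP: Hnd; case; apply/existsP; exists a; apply/existsP; exists b; rewrite ea eb !eqxx lt.
Qed.

Lemma merge_contig : contig t.
Proof.
apply/andP; split; first exact: merge_ssyt.
apply/forallP => w; apply/implyP => w0.
have := ltn_ord w; rewrite ltnS => wr.
case: (ltnP w i) => hw.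
  have /existsP [c /eqP e] : used T w by apply: contig_used => //; lia.
  by apply/existsP; exists c; rewrite vtM // /mfun e; ifs.
have /existsP [c /eqP e] : used T w.+1 by apply: contig_used => //; lia.
by apply/existsP; exists c; rewrite vtM // /mfun e; ifs.
Qed.

Lemma x_ins : ins x.
Proof. by apply: (ins_vt Hla TS); case: xP => ->. Qed.

Lemma vt_x : vt t x = i.
Proof. by rewrite vtM // /mfun; case: xP => ->; ifs. Qed.

Lemma x_notleft : notleft t x.
Proof.
have /existsP [y /eqP ey] : used T i by apply: contig_used => //; lia.
have [ex _] := xP.
have [_ lt] := ND Hla TS i0 Hnd ey ex.
apply/existsP; exists y; rewrite vt_x lt andbT vtM // /mfun ey; ifs.
Qed.

Lemma split_merge : splitf t x = T.
Proof.
apply/ffunP => c; apply/val_inj.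
change (vt (splitf t x) c = vt T c).
rewrite (vtS Hla) /sfun vt_x vtM // /mfun.
have [ex Hmin] := xP.
case: (ltngtP (vt T c) i.+1) => hc.
- case: (eqVneq (vt T c) i) => ec.
    have [_ lt] := ND Hla TS i0 Hnd ec ex.
    by ifs.
  by ifs.
- by ifs.
- by have := Hmin c hc; ifs.
Qed.

End Merge.

End Tab4.



Section Tab5.
Variable la : seq nat.
Hypothesis Hla : is_partition la.
Local Notation cell := (cell la).
Local Notation ins := (@ins la).

Definition shfun M (t : filling la M) (w : nat) (c : cell) : nat :=
  if w <= vt t c then (vt t c).+1 else vt t c.
Definition shiftf M (t : filling la M) (w : nat) : filling la M.+1 := mkf M.+1 (shfun t w).

Lemma vtSh M (t : filling la M) w c : vt (shiftf t w) c = shfun t w c.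
Proof. rewrite /shiftf vt_mkf // /shfun; have := vt_le t c; ifs. Qed.

Lemma vtU M (T : filling la M.+1) w c : ~~ used T w -> w <= M.+1 ->
  vt (mergef T w) c = mfun T w c.
Proof.
move=> nu wM; rewrite /mergef vt_mkf // /mfun.
have ne : vt T c != w by apply/negP => /eqP e; move/negP: nu; apply; apply/existsP; exists c; rewrite e.
have := vt_le T c; ifs.
Qed.

Section Sh.
Variable M : nat.
Variable t : filling la M.
Variable w : nat.
Hypothesis Ht : is_ssyt t.
Hypothesis w0 : 0 < w.

Lemma shift_ssyt : is_ssyt (shiftf t w).
Proof.
apply/(ssytP Hla); split.
  by move=> c; rewrite vtSh -(t_shp Hla Ht c) /shfun; ifs.
move=> a b ib h1 h2.
have [m1 m2] := t_mono Hla Ht ib h1 h2.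
rewrite !vtSh /shfun.
split; first by ifs.
by move=> /m2; ifs.
Qed.

Lemma shift_unused : ~~ used (shiftf t w) w.
Proof.
apply/negP => /existsP [c]; rewrite vtSh /shfun; ifs.
Qed.

Lemma merge_shift : w <= M.+1 -> mergef (shiftf t w) w = t.
Proof.
move=> wM; apply/ffunP => c; apply/val_inj.
change (vt (mergef (shiftf t w) w) c = vt t c).
by rewrite vtU ?shift_unused // /mfun vtSh /shfun; ifs.
Qed.

Lemma nused_shift : nused (shiftf t w) = nused t.
Proof.
pose f (v : 'I_M.+1) : 'I_M.+2 := inord (if w <= v then v.+1 else v).
have fK : forall v : 'I_M.+1, (f v : nat) = if w <= v then v.+1 else v.
  by move=> v; rewrite /f inordK //; have := ltn_ord v; ifs.
have finj : injective f.
  move=> u v e; have := congr1 (@nat_of_ord _) e; rewrite !fK => {}e; apply: val_inj => /=; move: e; ifs.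
rewrite /nused -(card_imset _ finj); apply: eq_card => y.
rewrite inE; apply/andP/imsetP.
  case=> y0 /existsP [c /eqP e].
  exists (t c); last by apply/val_inj; rewrite /= fK -e vtSh.
  rewrite inE; apply/andP; split; last by apply/existsP; exists c.
  by change (0 < vt t c); move: e y0; rewrite vtSh /shfun; ifs.
case=> v; rewrite inE => /andP [v0 /existsP [c /eqP e]] ->.
split; first by rewrite fK; ifs.
by apply/existsP; exists c; rewrite vtSh fK /shfun e.
Qed.

End Sh.

Section Un.
Variable M : nat.
Variable T : filling la M.+1.
Variable w : nat.
Hypothesis HT : is_ssyt T.
Hypothesis w0 : 0 < w.
Hypothesis wM : w <= M.+1.
Hypothesis Hu : ~~ used T w.

Lemma neq_w c : vt T c != w.
Proof. by apply/negP => /eqP e; move/negP: Hu; apply; apply/existsP; exists c; rewrite e. Qed.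

Lemma unshift_ssyt : is_ssyt (mergef T w).
Proof.
apply/(ssytP Hla); split.
  by move=> c; rewrite vtU // -(t_shp Hla HT c) /mfun; ifs.
move=> a b ib h1 h2.
have [m1 m2] := t_mono Hla HT ib h1 h2.
have na := neq_w a; have nb := neq_w b.
rewrite !vtU // /mfun.
split; first by ifs.
by move=> /m2; ifs.
Qed.

Lemma shift_unshift : shiftf (mergef T w) w = T.
Proof.
apply/ffunP => c; apply/val_inj.
change (vt (shiftf (mergef T w) w) c = vt T c).
have := neq_w c.
by rewrite vtSh /shfun vtU // /mfun; ifs.
Qed.

Lemma nused_unshift : nused (mergef T w) = nused T.
Proof. by rewrite -{2}shift_unshift nused_shift // unshift_ssyt. Qed.

End Un.

End Tab5.

Lemma card_bij (X Y : finType) (A : {set X}) (B : {set Y}) (f : X -> Y) (g : Y -> X) :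
  {in A, forall a, f a \in B} -> {in B, forall b, g b \in A} ->
  {in A, cancel f g} -> {in B, cancel g f} -> #|A| = #|B|.
Proof.
move=> fAB gBA fK gK.
rewrite -(@card_in_imset _ _ f A); last first.
  by move=> a b aA bA e; rewrite -(fK a aA) -(fK b bA) e.
apply: eq_card => b; apply/imsetP/idP.
  by case=> a aA ->; apply: fAB.
by move=> bB; exists (g b); [apply: gBA | rewrite gK].
Qed.

Lemma card_pairs (X Y : finType) (P : pred X) (Q : X -> pred Y) :
  #|[set p : X * Y | P p.1 && Q p.1 p.2]| = \sum_(x | P x) #|[set y | Q x y]|.
Proof.
rewrite -sum1_card big_mkcond.
have -> : \sum_(p : X * Y) (if p \in [set p : X * Y | P p.1 && Q p.1 p.2] then 1 else 0) =
   \sum_(x : X) \sum_(y : Y) (if (x, y) \in [set p : X * Y | P p.1 && Q p.1 p.2] then 1 else 0).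
  by rewrite pair_big; apply: eq_big => // [[x y]].
have H : forall x, \sum_(y : Y) (if (x, y) \in [set p : X * Y | P p.1 && Q p.1 p.2] then 1 else 0)
   = if P x then #|[set y | Q x y]| else 0.
  move=> x; case: (boolP (P x)) => Px.
    rewrite (eq_bigr (fun y => if y \in [set y | Q x y] then 1 else 0)); last by move=> y _; rewrite !inE /= Px.
    by rewrite -big_mkcond sum1_card.
  by apply: big1 => y _; rewrite inE /= (negbTE Px).
rewrite (eq_bigr _ (fun x _ => H x)) [RHS]big_mkcond //.
Qed.

Lemma sum_const_set (X : finType) (P : pred X) c : \sum_(x | P x) c = #|[set x | P x]| * c.
Proof. by rewrite -sum_nat_const big_set. Qed.

Section Tab6.
Variable la : seq nat.
Hypothesis Hla : is_partition la.
Local Notation cell := (cell la).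
Local Notation ins := (@ins la).

Lemma card_pos n : #|[set v : 'I_n.+1 | 0 < v]| = n.
Proof.
have -> : [set v : 'I_n.+1 | 0 < v] = [set~ ord0].
  by apply/setP => v; rewrite !inE lt0n.
by rewrite cardsC1 card_ord.
Qed.

Lemma card_left r (t : filling la r) : contig t -> #|[set c | ins c && ~~ notleft t c]| = r.
Proof.
move=> Ht; have tS := contig_ssyt Ht.
transitivity #|[set v : 'I_r.+1 | 0 < v]|; last exact: card_pos.
rewrite -(@card_in_imset _ _ t); last first.
  move=> a b; rewrite !inE => /andP [ia na] /andP [ib nb] e.
  have e' : vt t a = vt t b by rewrite /vt e.
  apply: (HS1 Hla tS e'); first by rewrite -lt0n (vt_ins Hla tS ia).
  apply/eqP; rewrite eqn_leq; apply/andP; split.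
    by rewrite leqNgt; apply/negP => lt; move/negP: na; apply; apply/existsP; exists b; rewrite e' eqxx lt.
  by rewrite leqNgt; apply/negP => lt; move/negP: nb; apply; apply/existsP; exists a; rewrite e' eqxx lt.
apply: eq_card => v; rewrite inE; apply/imsetP/idP.
  by case=> c; rewrite inE => /andP [ic _] ->; apply: (vt_ins Hla tS ic).
move=> v0.
have u : used t v by apply: contig_used => //; rewrite -ltnS.
case/existsP: (u) => c1 _.
have [el Hl] := leftmostP c1 u.
exists (leftmost t c1 v); last by apply/val_inj.
rewrite inE; apply/andP; split; first by apply: (ins_vt Hla tS); rewrite el -lt0n.
apply/negP => /existsP [y /andP [/eqP ey lt]].
by have := Hl y (etrans ey el); rewrite leqNgt lt.
Qed.

Lemma card_notleft r (t : filling la r) : contig t ->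
  #|[set c | ins c && notleft t c]| = sumn la - r.
Proof.
move=> Ht.
have := cardsID [set c | notleft t c] [set c : cell | ins c].
rewrite (card_shape Hla).
have -> : [set c : cell | ins c] :&: [set c | notleft t c] = [set c | ins c && notleft t c].
  by apply/setP => c; rewrite !inE.
have -> : [set c : cell | ins c] :\: [set c | notleft t c] = [set c | ins c && ~~ notleft t c].
  by apply/setP => c; rewrite !inE andbC.
rewrite card_left //; lia.
Qed.

Definition Acount M r := #|[set t : filling la M | is_ssyt t && (nused t == r)]|.
Definition Ecount r d := #|[set t : filling la r | contig t && (nd t == d)]|.

Lemma stage1 M r : (M.+1 - r) * Acount M.+1 r = M.+1 * Acount M r.
Proof.
pose L1 := [set p : filling la M.+1 * 'I_M.+2 | (is_ssyt p.1 && (nused p.1 == r)) && ((0 < p.2) && ~~ used p.1 p.2)].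
pose R1 := [set p : filling la M * 'I_M.+2 | (is_ssyt p.1 && (nused p.1 == r)) && (0 < p.2)].
have e : #|L1| = #|R1|.
  apply: (@card_bij _ _ L1 R1 (fun p => (mergef p.1 p.2, p.2)) (fun p => (shiftf p.1 p.2, p.2))).
  - move=> [T w]; rewrite !inE /= => /andP [/andP [HT /eqP nu] /andP [w0 Hu]].
    rewrite w0 unshift_ssyt //= ?nused_unshift ?nu ?eqxx //; by rewrite -ltnS.
  - move=> [t w]; rewrite !inE /= => /andP [/andP [Ht /eqP nu] w0].
    by rewrite w0 shift_ssyt //= nused_shift // nu eqxx shift_unused.
  - move=> [T w]; rewrite !inE /= => /andP [/andP [HT /eqP nu] /andP [w0 Hu]].
    by rewrite shift_unshift // -ltnS.
  - move=> [t w]; rewrite !inE /= => /andP [/andP [Ht /eqP nu] w0].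
    by rewrite merge_shift // -ltnS.
move: e; rewrite /L1 /R1.
rewrite (card_pairs (fun T : filling la M.+1 => is_ssyt T && (nused T == r)) (fun T (w : 'I_M.+2) => (0 < w) && ~~ used T w)).
rewrite (card_pairs (fun T : filling la M => is_ssyt T && (nused T == r)) (fun T (w : 'I_M.+2) => (0 < w))).
rewrite (eq_bigr (fun _ => M.+1 - r)); last first.
  move=> T /andP [_ /eqP nu].
  have := cardsID [set w : 'I_M.+2 | used T w] [set w : 'I_M.+2 | 0 < w].
  rewrite card_pos.
  have -> : [set w : 'I_M.+2 | 0 < w] :&: [set w : 'I_M.+2 | used T w] = [set v : 'I_M.+2 | (0 < v) && used T v].
    by apply/setP => c; rewrite !inE.
  have -> : [set w : 'I_M.+2 | 0 < w] :\: [set w : 'I_M.+2 | used T w] = [set y : 'I_M.+2 | (0 < y) && ~~ used T y].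
    by apply/setP => c; rewrite !inE andbC.
  rewrite -/(nused T) nu => h; exact: (canRL (addKn r) h).
move=> e.
have e2 : \sum_(x : filling la M | is_ssyt x && (nused x == r)) #|[set y : 'I_M.+2 | 0 < y]| =
   \sum_(x : filling la M | is_ssyt x && (nused x == r)) M.+1.
  by apply: eq_bigr => x _; exact: card_pos.
move: e; rewrite e2 !sum_const_set /Acount => e; rewrite mulnC (mulnC M.+1); exact: e.
Qed.

End Tab6.

Section Tab7.
Variable la : seq nat.
Hypothesis Hla : is_partition la.
Local Notation cell := (cell la).
Local Notation ins := (@ins la).

Lemma stage2 r d (c0 : cell) : d.+1 * Ecount la r.+1 d.+1 = (sumn la - r) * Ecount la r d.
Proof.
pose L2 := [set p : filling la r.+1 * 'I_r.+1 |
  (contig p.1 && (nd p.1 == d.+1)) && ((0 < p.2) && ~~ descb p.1 p.2)].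
pose R2 := [set p : filling la r * cell | (contig p.1 && (nd p.1 == d)) && (ins p.2 && notleft p.1 p.2)].
have e : #|L2| = #|R2|.
  apply: (@card_bij _ _ L2 R2 (fun p => (mergef p.1 p.2, leftmost p.1 c0 (p.2 : nat).+1))
                               (fun p => (splitf p.1 p.2, p.1 p.2))).
  - move=> [T i]; rewrite !inE /= => /andP [/andP [HT /eqP nT] /andP [i0 Hu]].
    have ir : (i : nat) <= r by rewrite -ltnS.
    rewrite merge_contig // x_ins // x_notleft //=.
    have := nd_split Hla (merge_contig Hla HT i0 ir Hu) (x_ins Hla c0 HT ir) (x_notleft Hla c0 HT i0 ir Hu).
    by rewrite (split_merge Hla c0 HT i0 ir Hu) nT => -[<-]; rewrite eqxx.
  - move=> [t x]; rewrite !inE /= => /andP [/andP [Ht /eqP nt] /andP [Hx Hnl]].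
    rewrite split_contig // nd_split // nt eqxx /=.
    by rewrite (v_gt0 Hla Ht Hx) (split_nondesc Hla Ht Hx Hnl).
  - move=> [T i]; rewrite !inE /= => /andP [/andP [HT /eqP nT] /andP [i0 Hu]].
    have ir : (i : nat) <= r by rewrite -ltnS.
    rewrite (split_merge Hla c0 HT i0 ir Hu); congr pair; apply/val_inj => /=.
    exact: (vt_x Hla c0 HT i0 ir Hu).
  - move=> [t x]; rewrite !inE /= => /andP [/andP [Ht /eqP nt] /andP [Hx Hnl]].
    by rewrite (merge_split Hla) (leftmost_split Hla c0 Ht Hx Hnl).
move: e; rewrite /L2 /R2.
rewrite (card_pairs (fun T : filling la r.+1 => contig T && (nd T == d.+1))
           (fun T (i : 'I_r.+1) => (0 < i) && ~~ descb T i)).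
rewrite (card_pairs (fun t : filling la r => contig t && (nd t == d))
           (fun t (x : cell) => ins x && notleft t x)).
have e1 : \sum_(T : filling la r.+1 | contig T && (nd T == d.+1)) #|[set i : 'I_r.+1 | (0 < i) && ~~ descb T i]|
   = \sum_(T : filling la r.+1 | contig T && (nd T == d.+1)) d.+1.
  by apply: eq_bigr => T /andP [_ /eqP <-].
have e2 : \sum_(t : filling la r | contig t && (nd t == d)) #|[set x : cell | ins x && notleft t x]|
   = \sum_(t : filling la r | contig t && (nd t == d)) (sumn la - r).
  by apply: eq_bigr => t /andP [Ht _]; apply: card_notleft.
rewrite e1 e2 !sum_const_set /Ecount => e; rewrite mulnC (mulnC (sumn la - r)); exact: e.
Qed.

End Tab7.

Lemma card_split (X : finType) (P : pred X) (f : X -> nat) K :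
  (forall x, P x -> f x < K) -> #|[set x | P x]| = \sum_(d < K) #|[set x | P x && (f x == d)]|.
Proof.
move=> H.
have e1 : forall d : 'I_K, #|[set x | P x && (f x == d)]| = \sum_(x | P x) ((f x == d) : nat).
  move=> d; rewrite -sum1_card big_set /= big_mkcondr /=; apply: eq_bigr => x _.
  by case: (f x == d).
rewrite (eq_bigr _ (fun d _ => e1 d)) exchange_big /= -sum1_card big_set /=.
apply: eq_bigr => x Px.
rewrite (bigD1 (Ordinal (H x Px))) //= eqxx big1 // => d nd.
case: eqP => // e; case/eqP: nd; apply: val_inj => /=; done.
Qed.

Lemma sum_ext0 (F : nat -> nat) a b : a <= b -> (forall j, a <= j < b -> F j = 0) ->
  \sum_(j < b) F j = \sum_(j < a) F j.
Proof.
move=> ab H; rewrite -!(big_mkord xpredT) (big_cat_nat (leq0n a) ab) /=.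
rewrite [X in _ + X]big_nat_cond [X in _ + X]big1 ?addn0 // => j /andP [hj _]; exact: H.
Qed.

Section Tab8.
Variable la : seq nat.
Hypothesis Hla : is_partition la.
Hypothesis Hne : la != [::].
Local Notation cell := (cell la).
Local Notation ins := (@ins la).
Local Notation n := (sumn la).

Lemma cell00 : exists c : cell, ins c.
Proof.
have hs : 0 < size la by rewrite lt0n size_eq0.
case/andP: Hla => _ Hpos.
have hh : 0 < head 0 la.
  by case: la Hne Hpos => // a l _ /= /andP [].
by exists (Ordinal hs, Ordinal hh); rewrite /ins /in_shape /= nth0.
Qed.

Lemma no_ssyt0 (t : filling la 0) : ~~ is_ssyt t.
Proof.
apply/negP => Ht; case: cell00 => c ic.
by have := vt_ins Hla Ht ic; have := vt_le t c; lia.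
Qed.

Lemma valvt M (t : filling la M) c : val (t c) = vt t c. Proof. by []. Qed.

Lemma nd0P r (t : filling la r) : (nd t == 0) = [forall u : 'I_r, (0 < u) ==> descb t u].
Proof.
rewrite /nd cards_eq0; apply/eqP/forallP.
  move=> e u; apply/implyP => u0; case: (boolP (descb t u)) => // nd.
  have : u \in [set u : 'I_r | (0 < u) && ~~ descb t u] by rewrite inE u0 nd.
  by rewrite e inE.
move=> H; apply/setP => u; rewrite !inE; have := H u.
by case: (0 < u) => //= ->.
Qed.

Lemma E0Q r : Ecount la r 0 = QYT_eq r la.
Proof.
rewrite /Ecount /QYT_eq; apply: eq_card => t; rewrite !inE.
case: r t => [|r] t.
  by rewrite /contig /is_qyt (negbTE (no_ssyt0 t)).
apply/idP/idP.
  case/andP => Ht; rewrite nd0P => /forallP Hd.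
  have tS := contig_ssyt Ht.
  apply/andP; split.
    apply/andP; split => //; apply/forallP => c; apply/implyP => c2.
    change (is_true (2 <= vt t c)) in c2.
    have cr := vt_le t c.
    have := Hd (inord (vt t c).-1); rewrite inordK; last lia.
    have -> : 0 < (vt t c).-1 by lia.
    case/existsP => a /existsP [b /and3P [ea eb lt]] /=.
    apply/existsP; exists b; apply/existsP; exists a.
    change (is_true [&& vt t b == vt t c, vt t a == (vt t c).-1 & a.1 < b.1]).
    rewrite (eqP ea) (eqP eb) lt.
    apply/and3P; split => //; apply/eqP; lia.
  have /existsP [c /eqP e] : used t r.+1 by apply: contig_used.
  by apply/existsP; exists c; rewrite valvt e.
case/andP => /andP [Ht /forallP Hq] /existsP [c0 /eqP e0].
have Hdown : forall w, used t w.+2 -> used t w.+1.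
  move=> w /existsP [c /eqP ec]; have := Hq c; rewrite valvt ec /= => /existsP [c1 /existsP [c2]].
  rewrite !valvt /= => /and3P [_ /eqP e2 _].
  by apply/existsP; exists c2; rewrite e2.
have Hall : forall k, k <= r -> used t (r.+1 - k).
  elim=> [|k IH] kr; first by rewrite subn0; apply/existsP; exists c0; rewrite /vt e0.
  have := IH (ltnW kr); have -> : r.+1 - k = (r.+1 - k.+1).+1 by lia.
  have -> : r.+1 - k.+1 = (r - k.+1).+1 by lia.
  exact: Hdown.
have Hu : forall w, 0 < w -> w <= r.+1 -> used t w.
  by move=> w w0 wr; have := Hall (r.+1 - w) (_ : _ <= r); rewrite subKn //; apply; lia.
apply/andP; split.
  apply/andP; split => //; apply/forallP => v; apply/implyP => v0; apply: Hu => //.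
  by rewrite -ltnS.
rewrite nd0P; apply/forallP => u; apply/implyP => u0.
have /existsP [c /eqP ec] : used t u.+1 by apply: Hu => //; have := ltn_ord u; lia.
have := Hq c; rewrite valvt ec; have -> : 2 <= u.+1 by lia.
move=> /existsP [c1 /existsP [c2]]; rewrite !valvt /=.
case/and3P => e1 e2 lt; apply/existsP; exists c2; apply/existsP; exists c1.
by rewrite e1 e2 lt.
Qed.

Lemma Eformula d r : d <= r -> r <= n ->
  Ecount la r d = 'C(n - r + d, d) * QYT_eq (r - d) la.
Proof.
elim: d r => [|d IH] r dr rn; first by rewrite bin0 mul1n subn0 E0Q.
case: r dr rn => [|r] // dr rn.
case: cell00 => c0 _.
have := stage2 Hla r d c0.
rewrite IH //; last by lia.
have -> : n - r.+1 + d.+1 = n - r + d by lia.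
have -> : r.+1 - d.+1 = r - d by lia.
have e : (n - r) * 'C(n - r + d, d) = d.+1 * 'C(n - r + d, d.+1).
  by rewrite mul_bin_left; congr (_ * _); lia.
rewrite mulnA e -mulnA => /eqP; rewrite eqn_pmul2l // => /eqP //.
Qed.

Lemma Ecount_sum r : #|[set t : filling la r | contig t]| = \sum_(d < r.+1) Ecount la r d.
Proof.
rewrite (@card_split _ (fun t : filling la r => contig t) (fun t => nd t) r.+1) //.
move=> t _; rewrite ltnS /nd; apply: leq_trans (max_card _) _; rewrite card_ord //.
Qed.

Lemma nused_le M (t : filling la M) : nused t <= M.
Proof.
rewrite /nused; apply: (@leq_trans #|[set v : 'I_M.+1 | 0 < v]|); last by rewrite card_pos.
by apply: subset_leq_card; apply/subsetP => v; rewrite !inE => /andP [].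
Qed.

Lemma Arr r : Acount la r r = #|[set t : filling la r | contig t]|.
Proof.
rewrite /Acount; apply: eq_card => t; rewrite !inE /contig.
case: (boolP (is_ssyt t)) => //= Ht.
have sub : [set v : 'I_r.+1 | (0 < v) && used t v] \subset [set v : 'I_r.+1 | 0 < v].
  by apply/subsetP => v; rewrite !inE => /andP [].
apply/eqP/forallP.
  move=> e; have e' : #|[set v : 'I_r.+1 | (0 < v) && used t v]| = #|[set v : 'I_r.+1 | 0 < v]|.
    by rewrite card_pos.
  move/(subset_cardP e'): sub => H v; apply/implyP => v0.
  by have := H v; rewrite !inE v0 /= => ->.
move=> H; rewrite /nused; transitivity #|[set v : 'I_r.+1 | 0 < v]|; last exact: card_pos.
apply: eq_card => v; rewrite !inE.
by case: (boolP (0 < v)) => //= v0; have := H v; rewrite v0.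
Qed.

Definition Etot r := #|[set t : filling la r | contig t]|.

Lemma Aformula M r : r <= M -> Acount la M r = 'C(M, r) * Etot r.
Proof.
move=> rM; rewrite -(subnK rM); elim: (M - r) => [|k IH].
  by rewrite add0n binn mul1n Arr.
have := stage1 Hla (k + r) r; rewrite IH -addSn.
have e : (k + r).+1 * 'C(k + r, r) = ((k + r).+1 - r) * 'C((k + r).+1, r).
  by rewrite -mul_bin_down.
rewrite mulnA e -mulnA => /eqP; rewrite eqn_pmul2l; last lia.
by move/eqP.
Qed.

Lemma SSYT_A M : SSYT M la = \sum_(r < M.+1) Acount la M r.
Proof.
rewrite /SSYT (@card_split _ (fun t : filling la M => is_ssyt t) (fun t => nused t) M.+1) //.
by move=> t _; rewrite ltnS nused_le.
Qed.

Lemma Ereindex r : r <= n ->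
  \sum_(d < r.+1) 'C(n - r + d, d) * QYT_eq (r - d) la =
  \sum_(j < n.+1) 'C(n - j, n - r) * QYT_eq j la.
Proof.
move=> rn.
rewrite (@sum_ext0 (fun j => 'C(n - j, n - r) * QYT_eq j la) r.+1 n.+1) //; last first.
  by move=> j /andP [h1 h2]; rewrite bin_small ?mul0n //; lia.
rewrite -(big_mkord xpredT (fun j => 'C(n - j, n - r) * QYT_eq j la)) big_rev_mkord subn0.
apply: eq_bigr => d _.
have -> : r.+1 - d.+1 = r - d by lia.
congr (_ * _); have dr := ltn_ord d.
have -> : n - (r - d) = n - r + d by lia.
by rewrite -(bin_sub (leq_addl (n - r) d)) addnK.
Qed.

Lemma SSYT_formula M : M <= n ->
  SSYT M la = \sum_(j < n.+1) 'C(M + (n - j), n) * QYT_eq j la.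
Proof.
move=> Mn.
have h1 : SSYT M la = \sum_(r < M.+1) 'C(M, r) * Etot r.
  by rewrite SSYT_A; apply: eq_bigr => r _; apply: Aformula; rewrite -ltnS.
have h2 : \sum_(r < M.+1) 'C(M, r) * Etot r = \sum_(r < n.+1) 'C(M, r) * Etot r.
  symmetry; apply: (@sum_ext0 (fun r => 'C(M, r) * Etot r)) => [|j /andP [j1 j2]]; first by [].
  by rewrite bin_small ?mul0n.
have h3 : forall r : 'I_n.+1, 'C(M, r) * Etot r =
    \sum_(j < n.+1) 'C(M, r) * ('C(n - j, n - r) * QYT_eq j la).
  move=> r; have rn : (r : nat) <= n by rewrite -ltnS.
  rewrite -big_distrr /=; congr (_ * _).
  rewrite /Etot Ecount_sum.
  rewrite (eq_bigr (fun d : 'I_r.+1 => 'C(n - r + d, d) * QYT_eq (r - d) la)); last first.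
    by move=> d _; rewrite Eformula //; rewrite -ltnS.
  by rewrite Ereindex.
rewrite h1 h2 (eq_bigr _ (fun r _ => h3 r)) exchange_big /=.
apply: eq_bigr => j _.
under eq_bigr do rewrite mulnA.
by rewrite -big_distrl binomial.Vandermonde.
Qed.

End Tab8.

Import GRing.Theory.

Local Open Scope ring_scope.

Lemma Posz_sum n (F : 'I_n -> nat) : ((\sum_(i < n) F i)%N)%:Z = \sum_(i < n) (F i)%:Z.
Proof.
elim/big_rec2: _ => // i a b _ <-; rewrite PoszD //.
Qed.

Section G.
Variable n : nat.
Hypothesis n0 : (0 < n)%N.

Definition g (a s L : nat) : int :=
  \sum_(i < L) (-1) ^+ i * ('C(a, i))%:Z * ('C(n + s - i, n))%:Z.

Lemma g_step a s L : g a.+1 s L.+1 = g a s L.+1 - (if s is s'.+1 then g a s' L else 0).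
Proof.
rewrite /g !big_ord_recl /= !bin0.
have e : forall i : 'I_L, (-1) ^+ (bump 0 i) * ('C(a.+1, bump 0 i))%:Z * ('C(n + s - bump 0 i, n))%:Z
    = (-1) ^+ (bump 0 i) * ('C(a, bump 0 i))%:Z * ('C(n + s - bump 0 i, n))%:Z
      - (-1) ^+ i * ('C(a, i))%:Z * ('C(n + s - i.+1, n))%:Z.
  move=> i; rewrite /bump /= add1n binS PoszD exprS.
  rewrite mulrDr mulrDl; congr (_ + _).
  by rewrite mulN1r !mulNr.
rewrite (eq_bigr _ (fun i _ => e i)) sumrB addrA; congr (_ - _).
case: s e => [|s'] e.
  by apply: big1 => i _; rewrite (@bin_small (n + 0 - i.+1) n); [rewrite mulr0 | lia].
by apply: eq_bigr => i _; congr (_ * _); congr (Posz 'C(_, _)); lia.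
Qed.

Lemma g_val a s L : (a <= n.+1)%N -> (s < L)%N ->
  g a s L = if a == n.+1 then (s == 0%N)%:Z else ('C(n - a + s, s))%:Z.
Proof.
elim: a s L => [|a IH] s L an sL.
  case: L sL => // L _.
  rewrite /g big_ord_recl big1 /=; last by move=> i _; rewrite bin0n /= mulr0 mul0r.
  rewrite expr0 mul1r bin0 mul1r addr0 subn0 subn0.
  by rewrite -(bin_sub (leq_addl n s)) addnK.
case: L sL => // L sL.
rewrite g_step IH //; last by lia.
have an' : (a <= n)%N by lia.
rewrite (_ : (a == n.+1) = false); last by lia.
case: s sL => [|s] sL.
  by rewrite !bin0 subr0; case: (a.+1 == n.+1).
rewrite IH //; last by lia.
rewrite (_ : (a == n.+1) = false); last by lia.
case: (eqVneq a n) => [->|ne].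
  by rewrite eqxx subnn !add0n !binn subrr.
rewrite (_ : (a.+1 == n.+1) = false); last by lia.
have -> : (n - a + s.+1 = (n - a.+1 + s.+1).+1)%N by lia.
have -> : (n - a + s = n - a.+1 + s.+1)%N by lia.
by rewrite binS PoszD addrK.
Qed.

End G.

Import GRing.Theory.
Local Open Scope ring_scope.

Theorem mainTheorem4 (la : seq nat) (n k : nat) :
  is_partition la -> sumn la = n -> (k < n)%N ->
  (QYT_eq k.+1 la)%:Z =
  \sum_(m < k.+1) (-1) ^+ (k - m) * ('C(n.+1, k - m))%:Z * (SSYT m.+1 la)%:Z.
Proof.
move=> Hla Hn kn.
subst n.
set n := sumn la.
have n0 : (0 < n)%N by lia.
have Hne : la != [::] by apply/eqP => e; move: n0; rewrite /n e.
have Q0 : QYT_eq 0 la = 0%N.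
  apply/eqP; rewrite cards_eq0; apply/eqP/setP => t; rewrite !inE.
  by rewrite /is_qyt (negbTE (no_ssyt0 Hla Hne t)).
have HS : forall m : 'I_k.+1, (SSYT m.+1 la)%:Z =
    \sum_(j < n.+1) ('C(m.+1 + (n - j), n))%:Z * (QYT_eq j la)%:Z.
  move=> m; rewrite (SSYT_formula Hla Hne); last by have := ltn_ord m; lia.
  by rewrite Posz_sum; apply: eq_bigr => j _; rewrite PoszM.
have coef : forall j : 'I_n.+1, (0 < j)%N ->
    \sum_(m < k.+1) (-1) ^+ (k - m) * ('C(n.+1, k - m))%:Z * ('C(m.+1 + (n - j), n))%:Z
    = ((j == k.+1 :> nat) : nat)%:Z.
  move=> j j0; have jn : (j <= n)%N by rewrite -ltnS.
  case: (ltnP k.+1 j) => hj.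
    rewrite (_ : (j == k.+1 :> nat) = false); last by lia.
    apply: big1 => m _; rewrite (@bin_small (m.+1 + (n - j)) n); last by have := ltn_ord m; lia.
    by rewrite mulr0.
  have sL : (k.+1 - j < k.+1)%N by lia.
  have := g_val n0 (leqnn n.+1) sL.
  rewrite eqxx.
  rewrite (_ : (k.+1 - j == 0)%N = (j == k.+1 :> nat)); last by lia.
  move=> <-; rewrite /g (reindex_inj rev_ord_inj) /=; apply: eq_bigr => i _.
  have ik := ltn_ord i.
  have -> : (k - (k.+1 - i.+1) = i)%N by lia.
  have -> : ((k.+1 - i.+1).+1 + (n - j) = n + (k.+1 - j) - i)%N by lia.
  by [].
under eq_bigr => m _ do rewrite HS mulr_sumr.
rewrite exchange_big /=.
under eq_bigr => j _ do under eq_bigr => m _ do rewrite mulrA.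
under eq_bigr => j _ do rewrite -mulr_suml.
have kn1 : (k.+1 < n.+1)%N by lia.
rewrite (bigD1 (Ordinal kn1)) // coef // /= eqxx mul1r big1 ?addr0 //.
move=> j nj; case: (posnP j) => [j0|j0].
  by rewrite j0 Q0 mulr0.
rewrite coef // (_ : (j == k.+1 :> nat) = false) ?mul0r //.
by apply/negP => /eqP e; case/eqP: nj; apply: val_inj.
Qed.
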